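(* Let $(A(t))_{t\in\mathbb{N}_0}$ be a sequence of row-stochastic matrices in $\mathbb{R}_{\ge 0}^{n\times n}$ such that: (i) every $A(t)$ has strictly positive diagonal entries; (ii) for every $t$ and all $i,j$, $A(t)_{ij}>0\iff A(t)_{ji}>0$; (iii) there is $\delta>0$ such that for every $t$ every positive entry of $A(t)$ is greater than $\delta$. For $t_0<t_1$ let $A(t_0,t_1):=A(t_1-1)A(t_1-2)\cdots A(t_0)$. Then for every two time steps $t_0<t_1$, the lowest positive entry of $A(t_0,t_1)$ is greater than $\delta^{n^2-n+2}$. *)

(* Defs.v *)
From mathcomp Require Import all_boot all_order all_algebra.
From mathcomp Require Import reals.
Set Implicit Arguments. Unset Strict Implicit. Unset Printing Implicit Defensive.
Import Order.TTheory GRing.Theory Num.Theory.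
Local Open Scope ring_scope.

Definition row_stochastic (R : realType) (n : nat) (A : 'M[R]_n) : Prop :=
  (forall i j, 0 <= A i j) /\ (forall i, \sum_(j < n) A i j = 1).

Fixpoint prod_seg (R : realType) (n : nat) (A : nat -> 'M[R]_n) (t0 k : nat)
  : 'M[R]_n :=
  match k with
  | 0 => 1%:M
  | k'.+1 => A (t0 + k')%N *m prod_seg A t0 k'
  end.

(* The paper's A(t0,t1) := A(t1-1) A(t1-2) ... A(t0), for t0 < t1. *)
Definition prod_int (R : realType) (n : nat) (A : nat -> 'M[R]_n) (t0 t1 : nat)
  : 'M[R]_n := prod_seg A t0 (t1 - t0).

(* Main.v *)
Require Import Defs.
From mathcomp Require Import all_boot all_order all_algebra.
From mathcomp Require Import reals.
From mathcomp Require Import zify.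
Import Order.TTheory GRing.Theory Num.Theory.
Local Open Scope ring_scope.

Lemma sum_ge_term (R : realType) (n : nat) (F : 'I_n -> R) (l : 'I_n) :
  (forall k, 0 <= F k) -> F l <= \sum_k F k.
Proof.
move=> H; rewrite (bigD1 l) //= lerDl; apply: sumr_ge0 => k _; exact: H.
Qed.

Lemma sum_pos_term (R : realType) (n : nat) (F : 'I_n -> R) :
  (forall k, 0 <= F k) -> 0 < \sum_k F k -> exists l, 0 < F l.
Proof.
move=> H Hs; case: (boolP [exists l, 0 < F l]) => [/existsP//|/existsP Hn].
exfalso; move: Hs; rewrite big1 ?ltxx // => k _.
apply/eqP; rewrite eq_le H andbT leNgt; apply/negP => Hk; apply: Hn; by exists k.
Qed.

Lemma nlt (n : nat) : (n < n ^ 2 - n + 2)%N.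
Proof. rewrite -mulnn; nia. Qed.

Arguments sum_ge_term {R n F} l.
Arguments sum_pos_term {R n F}.

Theorem proposition2 (R : realType) (n : nat) (A : nat -> 'M[R]_n) (delta : R) :
  (forall t, row_stochastic (A t)) ->
  (forall t (i : 'I_n), 0 < A t i i) ->
  (forall t (i j : 'I_n), 0 < A t i j <-> 0 < A t j i) ->
  0 < delta ->
  (forall t (i j : 'I_n), 0 < A t i j -> delta < A t i j) ->
  forall (t0 t1 : nat), (t0 < t1)%N ->
  forall (i j : 'I_n), 0 < prod_int A t0 t1 i j ->
    delta ^+ (n ^ 2 - n + 2) < prod_int A t0 t1 i j.
Proof.
move=> Hst Hdiag Hsym Hd Hdel t0 t1 _ i j.
have Anng t a b : 0 <= A t a b by case: (Hst t).
have dlt1 : delta < 1.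
  apply: (lt_le_trans (Hdel 0%N j j (Hdiag 0%N j))).
  case: (Hst 0%N) => H1 H2; rewrite -(H2 j); exact: sum_ge_term.
pose x k a := prod_seg A t0 k a j.
have xS k a : x k.+1 a = \sum_l A (t0 + k)%N a l * x k l by rewrite /x /= mxE.
have xnn k a : 0 <= x k a.
  elim: k a => [|k IH] a; first by rewrite /x /= mxE ler0n.
  rewrite xS; apply: sumr_ge0 => l _; exact: mulr_ge0.
have termnn k a l : 0 <= A (t0 + k)%N a l * x k l by exact: mulr_ge0.
pose S k := [set a | 0 < x k a].
have Smono k : S k \subset S k.+1.
  apply/subsetP => a; rewrite !inE => Ha; rewrite xS.
  apply: lt_le_trans (sum_ge_term a (termnn k a)); exact: mulr_gt0.
have inv k : forall a, 0 < x k a -> delta ^+ #|S k| <= x k a.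
  elim: k => [|k IH] a.
    have -> : S 0%N = [set j].
      apply/setP => b; rewrite !inE /x /= mxE.
      by case: (b == j); rewrite ?ltr01 ?ltxx.
    rewrite cards1 expr1 /x /= mxE; case: (a == j); rewrite ?ltxx //.
    by move=> _; apply: ltW.
  move=> Ha.
  have Hc := subset_leq_card (Smono k).
  case: (ltnP #|S k| #|S k.+1|) => Hlt.
    have Ha' : 0 < \sum_l A (t0 + k)%N a l * x k l by rewrite -xS.
    have [l Hl] := sum_pos_term (termnn k a) Ha'.
    have Al : 0 < A (t0 + k)%N a l.
      rewrite lt_def Anng andbT; apply/eqP => e; move: Hl; by rewrite e mul0r ltxx.
    have xl : 0 < x k l.
      rewrite lt_def xnn andbT; apply/eqP => e; move: Hl; by rewrite e mulr0 ltxx.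
    apply: le_trans (_ : delta ^+ #|S k|.+1 <= _).
      by apply: ler_wiXn2l => //; apply: ltW.
    rewrite xS; apply: le_trans (sum_ge_term l (termnn k a)).
    rewrite exprSr mulrC; apply: ler_pM; [exact: ltW | exact: exprn_ge0 (ltW Hd) | exact: ltW (Hdel _ _ _ Al) | exact: IH].
  have eqS : S k = S k.+1 by apply/eqP; rewrite eqEcard Smono.
  have Hak : 0 < x k a.
    have : a \in S k.+1 by rewrite inE.
    by rewrite -eqS inE.
  rewrite -eqS xS.
  case: (Hst (t0 + k)%N) => _ /(_ a) Hsum.
  apply: le_trans (_ : \sum_l A (t0 + k)%N a l * delta ^+ #|S k| <= _).
    by rewrite -mulr_suml Hsum mul1r.
  apply: ler_sum => l _.
  have [->|Hne] := eqVneq (A (t0 + k)%N a l) 0; first by rewrite !mul0r.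
  have Al : 0 < A (t0 + k)%N a l by rewrite lt_def Hne Anng.
  have Ala : 0 < A (t0 + k)%N l a by apply/Hsym.
  have xl : 0 < x k l.
    have : l \in S k.+1.
      rewrite inE xS; apply: lt_le_trans (sum_ge_term a (termnn k l)).
      exact: mulr_gt0.
    by rewrite -eqS inE.
  apply: ler_wpM2l; first exact: Anng.
  exact: IH.
rewrite /prod_int => Hp.
have H := inv (t1 - t0)%N i Hp.
apply: lt_le_trans H.
apply: lt_le_trans (_ : delta ^+ n <= _).
  rewrite ltr_iXn2l //.
  exact: nlt.
apply: ler_wiXn2l => //.
  exact: ltW Hd.
  exact: ltW dlt1.
exact: (leq_trans (max_card _) (eq_leq (card_ord n))).
Qed.
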